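(* Let $0<c\le1<F$ and $s>0$. There exist constants $a_1,a_2,b>0$ depending only on $c$ such that at every time $t$ with $Z^t>0$, $$\mathbb E[Z^t-Z^{t+1}\mid x^t,\lambda^t]\ge \Pr[B\mid x^t,\lambda^t]\cdot a_1\big(1-c(1-Z^t/n)\big)-a_2e^{-b\lambda^t}.$$ This also holds with $Z^t-Z^{t+1}$ replaced by $\min\{1,Z^t-Z^{t+1}\}$.
   Context: Consider the SA-$(1,\lambda)$-EA on a dynamic monotone function: a function $f:\{0,1\}^n\to\mathbb R$ is monotone if $f(x)>f(y)$ whenever $x\ne y$ and $x_i\ge y_i$ for all $i$; $(f^t)_{t\ge0}$ is a sequence of monotone functions, $f^t$ possibly chosen adversarially depending on $x^t$. The algorithm (with constants $c>0$, $s>0$, $F>1$) maintains $x^t\in\{0,1\}^n$, real $\lambda^t\ge1$; in generation $t$ it creates $\lfloor\lambda^t\rceil$ (nearest integer) offspring $y^{t,j}$, each independently by flipping every bit of $x^t$ independently with probability $c/n$; $x^{t+1}$ is an offspring maximizing $f^t$ (ties uniformly at random); $\lambda^{t+1}=\max\{1,\lambda^t/F\}$ if $f^t(x^{t+1})>f^t(x^t)$, else $\lambda^{t+1}=F^{1/s}\lambda^t$. $Z^t$ is the number of zero-bits of $x^t$. $B$ is the event that some offspring of $x^t$ flips at least one zero-bit of $x^t$. *)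

(* Defs.v *)
From mathcomp Require Import all_boot all_order all_algebra.
From mathcomp Require Import all_classical all_reals all_analysis.
Set Implicit Arguments. Unset Strict Implicit. Unset Printing Implicit Defensive.
Import Order.TTheory GRing.Theory Num.Theory.
Local Open Scope ring_scope.

Definition bits (n : nat) := {ffun 'I_n -> bool}.

Definition zeros n (x : bits n) : nat := #|[set i | ~~ x i]|.

Definition monotone_fun (R : realType) n (f : bits n -> R) : Prop :=
  forall x y : bits n, x != y -> (forall i, y i ==> x i) -> f y < f x.

Definition round_nat (R : realType) (lam : R) : nat := Num.truncn (lam + 2^-1).

Definition mut_prob (R : realType) n (c : R) (x y : bits n) : R :=
  \prod_(i < n) (if y i != x i then c / n%:R else 1 - c / n%:R).

Definition pop_prob (R : realType) n m (c : R) (x : bits n)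
    (Y : {ffun 'I_m -> bits n}) : R :=
  \prod_(j < m) mut_prob c x (Y j).

Definition winners (R : realType) n m (f : bits n -> R)
    (Y : {ffun 'I_m -> bits n}) : {set 'I_m} :=
  [set j | [forall k, f (Y k) <= f (Y j)]].

(* expectation of g(x^{t+1}) given the offspring Y: uniform tie-breaking *)
Definition select_exp (R : realType) n m (f : bits n -> R) (g : bits n -> R)
    (Y : {ffun 'I_m -> bits n}) : R :=
  (#|winners f Y|%:R)^-1 * \sum_(j in winners f Y) g (Y j).

(* E[ g(x^{t+1}) | x^t = x, lambda^t = lam ] for one generation of the
   SA-(1,lambda)-EA, fitness f^t = f *)
Definition next_exp (R : realType) n (c lam : R) (x : bits n)
    (f : bits n -> R) (g : bits n -> R) : R :=
  \sum_(Y : {ffun 'I_(round_nat lam) -> bits n})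
     pop_prob c x Y * select_exp f g Y.

(* Pr[B | x^t = x, lambda^t = lam]: some offspring flips a zero-bit of x *)
Definition probB (R : realType) n (c lam : R) (x : bits n) : R :=
  \sum_(Y : {ffun 'I_(round_nat lam) -> bits n}
          | [exists j, exists i, ~~ x i && Y j i])
     pop_prob c x Y.

(* Main.v *)
Require Import Defs.
From mathcomp Require Import all_boot all_order all_algebra.
From mathcomp Require Import all_classical all_reals all_analysis.
From mathcomp Require Import ring lra.
Import Order.TTheory GRing.Theory Num.Theory.
Local Open Scope ring_scope.
Set Implicit Arguments. Unset Strict Implicit. Unset Printing Implicit Defensive.

Definition flipb n (y : bits n) (i : 'I_n) : bits n :=
  [ffun k => if k == i then ~~ y k else y k].

Lemma flipbK n (i : 'I_n) : involutive (fun y => flipb y i).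
Proof. by move=> y; apply/ffunP=> k; rewrite !ffunE; case: eqP => // ->; rewrite negbK. Qed.

Lemma flipb_i n (y : bits n) i : flipb y i i = ~~ y i.
Proof. by rewrite ffunE eqxx. Qed.

Lemma flipb_ne n (y : bits n) i k : k != i -> flipb y i k = y k.
Proof. by rewrite ffunE => /negbTE ->. Qed.

Lemma mut_flip (R : realType) n (c : R) (x y : bits n) i :
  y i = x i ->
  mut_prob c x (flipb y i) * (1 - c / n%:R) = c / n%:R * mut_prob c x y.
Proof.
move=> yi; rewrite /mut_prob (bigD1 i) //= [in RHS](bigD1 i) //=.
rewrite flipb_i yi eqxx /= -yi.
have -> : (~~ y i != y i) = true by case: (y i).
under eq_bigr => k /negbTE kn do rewrite flipb_ne ?kn //.
ring.
Qed.

Definition flipP n m (Y : {ffun 'I_m -> bits n}) (j : 'I_m) (i : 'I_n) :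
  {ffun 'I_m -> bits n} := [ffun k => if k == j then flipb (Y k) i else Y k].

Lemma flipPK n m j i : involutive (fun Y : {ffun 'I_m -> bits n} => flipP Y j i).
Proof.
move=> Y; apply/ffunP=> k; rewrite !ffunE; case: eqP => // ->.
by rewrite flipbK.
Qed.

Lemma flipP_j n m (Y : {ffun 'I_m -> bits n}) j i : flipP Y j i j = flipb (Y j) i.
Proof. by rewrite ffunE eqxx. Qed.

Lemma flipP_ne n m (Y : {ffun 'I_m -> bits n}) j i k : k != j -> flipP Y j i k = Y k.
Proof. by rewrite ffunE => /negbTE ->. Qed.

Lemma pop_flip (R : realType) n m (c : R) (x : bits n) (Y : {ffun 'I_m -> bits n}) j i :
  Y j i = x i ->
  pop_prob c x (flipP Y j i) * (1 - c / n%:R) = c / n%:R * pop_prob c x Y.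
Proof.
move=> yi; rewrite /pop_prob (bigD1 j) //= [in RHS](bigD1 j) //=.
rewrite flipP_j.
under eq_bigr => k /negbTE kn do rewrite flipP_ne ?kn //.
rewrite mulrAC mut_flip //; ring.
Qed.

Lemma mut_ge0 (R : realType) n (c : R) (x y : bits n) :
  0 <= c -> c <= 1 -> (0 < n)%N -> 0 <= mut_prob c x y.
Proof.
move=> c0 c1 n0; rewrite /mut_prob; apply: prodr_ge0 => i _.
have nR : 1 <= n%:R :> R by rewrite ler1n.
have hp : c / n%:R <= 1.
  by rewrite ler_pdivrMr ?(lt_le_trans ltr01) // mul1r (le_trans c1).
case: ifP => _; [exact: divr_ge0|]; by rewrite subr_ge0.
Qed.

Lemma pop_ge0 (R : realType) n m (c : R) (x : bits n) Y :
  0 <= c -> c <= 1 -> (0 < n)%N -> 0 <= pop_prob (m:=m) c x Y.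
Proof. by move=> c0 c1 n0; apply: prodr_ge0 => j _; apply: mut_ge0. Qed.

Lemma pR_bounds (R : realType) n (c : R) : 0 <= c -> c <= 1 -> (0 < n)%N ->
  0 <= c / n%:R <= 1.
Proof.
move=> c0 c1 n0; have nR : 1 <= n%:R :> R by rewrite ler1n.
rewrite divr_ge0 //= ler_pdivrMr ?(lt_le_trans ltr01) // mul1r (le_trans c1) //.
Qed.

Lemma toggle_le (R : realType) n m (c : R) (x : bits n)
    (phi : {ffun 'I_m -> bits n} -> R) (j : 'I_m) (i : 'I_n) :
  0 <= c -> c <= 1 -> (0 < n)%N ->
  (forall Y, 0 <= phi Y) ->
  (forall Y : {ffun 'I_m -> bits n}, Y j i = x i -> phi (flipP Y j i) <= phi Y) ->
  \sum_(Y : {ffun 'I_m -> bits n} | Y j i != x i) pop_prob c x Y * phi Y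
    <= c / n%:R * \sum_(Y : {ffun 'I_m -> bits n}) pop_prob c x Y * phi Y.
Proof.
move=> c0 c1 n0 phi0 phimon.
have /andP[p0 p1] := pR_bounds c0 c1 n0.
set p := c / n%:R in p0 p1 *.
rewrite [X in _ <= _ * X](bigID (fun Y : {ffun 'I_m -> bits n} => Y j i != x i)) /=.
set A := \sum_(Y | _ != _) _.
set U := \sum_(Y | ~~ (_ != _)) _.
have key : (1 - p) * A <= p * U.
  rewrite /A mulr_sumr (reindex_inj (inv_inj (flipPK j i))) /=.
  rewrite /U mulr_sumr.
  rewrite (eq_bigl (fun Y : {ffun 'I_m -> bits n} => ~~ (Y j i != x i))); last first.
    by move=> Y; rewrite flipP_j flipb_i; case: (Y j i); case: (x i).
  apply: ler_sum => Y /negPn /eqP yi.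
  rewrite mulrCA mulrA pop_flip // -mulrA.
  rewrite mulrA -/p -mulrA; apply: ler_wpM2l => //.
  by apply: ler_wpM2l; [apply: pop_ge0|apply: phimon].
rewrite mulrBl mul1r in key.
rewrite mulrDr; lra.
Qed.

Lemma toggle_eq_bits (R : realType) n (c : R) (x : bits n) (E : pred (bits n)) (i : 'I_n) :
  (forall y, E (flipb y i) = E y) ->
  \sum_(y : bits n | E y && (y i == x i)) mut_prob c x y
    = (1 - c / n%:R) * \sum_(y : bits n | E y) mut_prob c x y.
Proof.
move=> Ei.
rewrite [X in _ = _ * X](bigID (fun y : bits n => y i == x i)) /=.
set A := \sum_(y | E y && (y i == x i)) _.
set U := \sum_(y | E y && ~~ (y i == x i)) _.
have key : (1 - c / n%:R) * U = c / n%:R * A.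
  rewrite /U mulr_sumr (reindex_inj (inv_inj (flipbK i))) /=.
  rewrite /A mulr_sumr.
  apply: eq_big => y.
    by rewrite Ei flipb_i; case: (y i); case: (x i).
  move=> /andP[_ h]; have yi : y i = x i.
    by move: h; rewrite flipb_i; case: (y i); case: (x i).
  by rewrite mulrC mut_flip.
rewrite mulrDr key; ring.
Qed.

Definition Sz n (x y : bits n) : bool := [exists i, ~~ x i && y i].

Lemma Sz_flip n (x y : bits n) i : x i -> Sz x (flipb y i) = Sz x y.
Proof.
move=> xi; apply/existsP/existsP => -[k /andP[xk yk]]; exists k; rewrite xk /=.
  by move: yk; rewrite ffunE; case: eqP => // ek; move: xk; rewrite ek xi.
by rewrite ffunE; case: eqP => // ek; move: xk; rewrite ek xi.
Qed.

Lemma restore_ones (R : realType) n (c : R) (x : bits n) (s : seq 'I_n) :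
  uniq s -> all (fun i => x i) s ->
  \sum_(y : bits n | Sz x y && all (fun i => y i == x i) s) mut_prob c x y
    = (1 - c / n%:R) ^+ size s * \sum_(y : bits n | Sz x y) mut_prob c x y.
Proof.
elim: s => [|i s IH] /=.
  by move=> _ _; rewrite expr0 mul1r; apply: eq_bigl => y; rewrite andbT.
move=> /andP[nis us] /andP[xi xs].
rewrite exprS -mulrA -IH //.
rewrite -(toggle_eq_bits _ _ (E := fun y => Sz x y && all (fun i => y i == x i) s) (i := i)).
  by apply: eq_bigl => y /=; rewrite -andbA [_ && (y i == _)]andbC.
move=> y; rewrite Sz_flip //; congr (_ && _).
apply: eq_in_all => k ks; rewrite flipb_ne //.
by apply: contraNneq nis => <-.
Qed.


Lemma sum_ffun_prod (R : realType) m (T : finType) (G : 'I_m -> T -> R) :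
  \sum_(Y : {ffun 'I_m -> T}) \prod_j G j (Y j) = \prod_j \sum_(t : T) G j t.
Proof. by rewrite bigA_distr_bigA. Qed.

Lemma mut_sum1 (R : realType) n (c : R) (x : bits n) :
  \sum_(y : bits n) mut_prob c x y = 1.
Proof.
rewrite /mut_prob (sum_ffun_prod (fun i (b : bool) => if b != x i then c / n%:R else 1 - c / n%:R)).
apply: big1 => i _; rewrite big_bool /=; case: (x i) => /=; ring.
Qed.

Lemma mut_copy (R : realType) n (c : R) (x : bits n) :
  mut_prob c x x = (1 - c / n%:R) ^+ n.
Proof.
rewrite /mut_prob (eq_bigr (fun _ => 1 - c / n%:R)); last by move=> i _; rewrite eqxx.
by rewrite prodr_const card_ord.
Qed.

Lemma prod_ind (R : realType) m (b : 'I_m -> bool) :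
  \prod_j ((b j)%:R : R) = ([forall j, b j])%:R.
Proof.
case: (boolP [forall j, b j]) => [/forallP h|].
  by apply: big1 => j _; rewrite h.
rewrite negb_forall => /existsP[j /negbTE bj].
by rewrite (bigD1 j) //= bj mul0r.
Qed.

Lemma pop_prod_event (R : realType) n m (c : R) (x : bits n) (A : 'I_m -> pred (bits n)) :
  \sum_(Y : {ffun 'I_m -> bits n}) pop_prob c x Y * \prod_j ((A j (Y j))%:R : R)
    = \prod_j \sum_(y | A j y) mut_prob c x y.
Proof.
transitivity (\sum_(Y : {ffun 'I_m -> bits n}) \prod_j (mut_prob c x (Y j) * ((A j (Y j))%:R : R))).
  by apply: eq_bigr => Y _; rewrite big_split.
rewrite (sum_ffun_prod (fun j y => mut_prob c x y * (A j y)%:R)).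
apply: eq_bigr => j _; rewrite [RHS]big_mkcond /=; apply: eq_bigr => y _.
by case: (A j y); rewrite ?mulr1 ?mulr0.
Qed.

Lemma pop_sum1 (R : realType) n m (c : R) (x : bits n) :
  \sum_(Y : {ffun 'I_m -> bits n}) pop_prob c x Y = 1.
Proof.
transitivity (\sum_(Y : {ffun 'I_m -> bits n}) pop_prob c x Y * \prod_(j < m) ((true)%:R : R)).
  by apply: eq_bigr => Y _; rewrite big1 ?mulr1.
rewrite (pop_prod_event c x (fun _ _ => true)).
by apply: big1 => j _; rewrite -[RHS](mut_sum1 c x).
Qed.

Lemma prob_exists (R : realType) n m (c : R) (x : bits n) (A : pred (bits n)) :
  \sum_(Y : {ffun 'I_m -> bits n} | [exists j, A (Y j)]) pop_prob c x Y
    = 1 - (1 - \sum_(y | A y) mut_prob c x y) ^+ m.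
Proof.
have h1 : 1 - \sum_(y | A y) mut_prob c x y = \sum_(y | ~~ A y) mut_prob c x y.
  by rewrite -(mut_sum1 c x) (bigID A) /=; ring.
rewrite h1 -[m in _ ^+ m]card_ord -prodr_const -(pop_prod_event c x (fun _ y => ~~ A y)).
set E := fun Y : {ffun 'I_m -> bits n} => [exists j, A (Y j)].
have e1 : \sum_(Y : {ffun 'I_m -> bits n} | E Y) pop_prob c x Y * \prod_j ((~~ A (Y j))%:R : R) = 0.
  apply: big1 => Y /existsP[j Aj]; rewrite prod_ind.
  suff -> : [forall j, ~~ A (Y j)] = false by rewrite mulr0.
  by apply/negbTE; rewrite negb_forall; apply/existsP; exists j; rewrite negbK.
have e2 : \sum_(Y : {ffun 'I_m -> bits n} | ~~ E Y) pop_prob c x Y * \prod_j ((~~ A (Y j))%:R : R)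
   = \sum_(Y : {ffun 'I_m -> bits n} | ~~ E Y) pop_prob c x Y.
  apply: eq_bigr => Y; rewrite /E negb_exists => h.
  by rewrite prod_ind h mulr1.
rewrite [X in _ = 1 - X](bigID E) /= e1 e2 add0r.
have := pop_sum1 m c x; rewrite (bigID E) /= => <-.
by rewrite addrK.
Qed.


Lemma geom_cmp (R : realType) (Q b : R) m : 0 <= Q <= 1 -> 0 <= b <= 1 ->
  Q * (1 - (1 - b) ^+ m) <= 1 - (1 - Q * b) ^+ m.
Proof.
move=> /andP[Q0 Q1] /andP[b0 b1]; elim: m => [|m IH]; first by rewrite !expr0; lra.
have h1 : (1 - b) ^+ m <= (1 - Q * b) ^+ m.
  apply: lerXn2r; rewrite ?nnegrE; try nra.
have h2 : 0 <= (1 - b) ^+ m by apply: exprn_ge0; lra.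
rewrite !exprSr.
have: Q * b * (1 - b) ^+ m <= Q * b * (1 - Q * b) ^+ m.
  by apply: ler_wpM2l => //; nra.
nra.
Qed.

Lemma exp_lb (R : realType) (t : R) : 0 <= t -> t <= 2^-1 -> expR (- (2 * t)) <= 1 - t.
Proof.
move=> t0 t1.
have h := expR_ge1Dx (2 * t).
have e : expR (- (2 * t)) * expR (2 * t) = 1 by rewrite -expRD addNr expR0.
have ep := expR_gt0 (- (2 * t)).
have : (1 + 2 * t) * (1 - t) >= 1 by nra.
nra.
Qed.

Lemma pow_lb (R : realType) (p : R) n k : (2 <= n)%N -> (k <= n)%N ->
  0 <= p -> p * n%:R <= 1 -> expR (-2) <= (1 - p) ^+ k.
Proof.
move=> n2 kn p0 pn.
have nR : 2 <= n%:R :> R by rewrite (ler_nat R 2 n).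
have p2 : p <= 2^-1 by nra.
have p1 : 0 <= 1 - p by lra.
apply: (le_trans _ (ler_wiXn2l p1 _ kn)); last by lra.
have e1 : expR (- (2 * p)) ^+ n <= (1 - p) ^+ n.
  by apply: lerXn2r; rewrite ?nnegrE ?expR_ge0 //; apply: exp_lb.
apply: le_trans e1; rewrite -expRM_natr ler_expR; nra.
Qed.

Lemma lin_geom (R : realType) (t : R) m : 0 <= t < 1 ->
  m%:R * t ^+ m * (1 - t) <= 1.
Proof.
move=> /andP[t0 t1].
suff : m%:R * t ^+ m * (1 - t) <= 1 - t ^+ m.
  by have := exprn_ge0 m t0; lra.
elim: m => [|m IH]; first by rewrite expr0 mul0r mul0r; lra.
have hm : 0 <= t ^+ m by apply: exprn_ge0.
have hm1 : t ^+ m <= 1 by apply: exprn_ile1 => //; lra.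
rewrite exprS -natr1.
have := ler_wpM2l t0 IH.
set u := t ^+ m in hm hm1 *.
have : 0 <= (1 - t) * (1 - t * u) by apply: mulr_ge0; nra.
nra.
Qed.

Lemma err_bound (R : realType) : exists a2 b : R, [/\ 0 < a2, 0 < b &
  forall (lam r' : R) (m : nat), 0 <= r' <= 1 - expR (-2) ->
    lam - 2^-1 <= m%:R -> (1 <= m)%N ->
    m%:R * r' ^+ m.-1 <= a2 * expR (- (b * lam))].
Proof.
set r : R := 1 - expR (-2).
have e2 : expR (-2) < 1 :> R by rewrite expR_lt1; lra.
have e2p : 0 < expR (-2) :> R := expR_gt0 _.
have r0 : 0 < r by rewrite /r; lra.
have r1 : r < 1 by rewrite /r; lra.
set s : R := (1 + r) / 2.
have s0 : 0 < s by rewrite /s; lra.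
have s1 : s < 1 by rewrite /s; lra.
set t : R := r / s.
have ts : t * s = r by rewrite /t divfK //; lra.
have t0 : 0 <= t by rewrite /t divr_ge0 //; lra.
have t1 : t < 1 by rewrite /t ltr_pdivrMr //; rewrite /s; lra.
set b : R := - ln s.
have b0 : 0 < b by rewrite /b oppr_gt0 ln_lt0 // s0 s1.
exists (expR (b / 2) / (r * (1 - t))), b; split => //.
  by apply: divr_gt0; [exact: expR_gt0 | apply: mulr_gt0; lra].
move=> lam r' m /andP[r'0 r'1] hm m1.
have sm : s ^+ m = expR (- (b * m%:R)).
  by rewrite /b mulNr opprK expRM_natr lnK // posrE.
have k1 : m%:R * r' ^+ m.-1 <= m%:R * r ^+ m.-1.
  apply: ler_wpM2l; first exact: ler0n.
  by apply: lerXn2r; rewrite ?nnegrE //; lra.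
apply: (le_trans k1).
have k2 : m%:R * t ^+ m * (1 - t) <= 1 by apply: lin_geom; rewrite t0 t1.
have k3 : r * (m%:R * r ^+ m.-1) = m%:R * t ^+ m * s ^+ m.
  by rewrite mulrCA -exprS prednK // -ts exprMn mulrA.
have k4 : s ^+ m <= expR (b / 2) * expR (- (b * lam)).
  by rewrite sm -expRD ler_expR; nra.
have hsm : 0 <= s ^+ m by apply: exprn_ge0; lra.
rewrite mulrAC ler_pdivlMr; last by apply: mulr_gt0; lra.
have hmt : 0 <= m%:R * t ^+ m by apply: mulr_ge0 => //; apply: exprn_ge0.
have : m%:R * t ^+ m * s ^+ m * (1 - t) <= s ^+ m.
  by rewrite mulrAC; have := ler_wpM2r hsm k2; rewrite mul1r.
rewrite -k3 => h.
have ep := expR_gt0 (b / 2); have ep2 := expR_gt0 (- (b * lam)).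
nra.
Qed.


Definition Wt (R : realType) n m (f : bits n -> R) (Y : {ffun 'I_m -> bits n}) (j : 'I_m) : R :=
  if j \in winners f Y then (#|winners f Y|%:R)^-1 else 0.

Lemma select_expE (R : realType) n m (f g : bits n -> R) (Y : {ffun 'I_m -> bits n}) :
  select_exp f g Y = \sum_j Wt f Y j * g (Y j).
Proof.
rewrite /select_exp mulr_sumr big_mkcond /=; apply: eq_bigr => j _.
by rewrite /Wt; case: ifP; rewrite ?mul0r.
Qed.

Lemma Wt_ge0 (R : realType) n m (f : bits n -> R) Y (j : 'I_m) : 0 <= Wt f Y j.
Proof. by rewrite /Wt; case: ifP => // _; rewrite invr_ge0 ler0n. Qed.

Lemma Wt_le1 (R : realType) n m (f : bits n -> R) Y (j : 'I_m) : Wt f Y j <= 1.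
Proof.
rewrite /Wt; case: ifP => // jw.
have : (1 <= #|winners f Y|)%N by apply/card_gt0P; exists j.
rewrite -(ler_nat R) => h; rewrite invf_le1 // (lt_le_trans ltr01) //.
Qed.

Lemma winners_ex (R : realType) n m (f : bits n -> R) (Y : {ffun 'I_m -> bits n}) :
  (0 < m)%N -> exists j, j \in winners f Y.
Proof.
case: m Y => // m Y _.
case: (@arg_maxP _ _ 'I_m.+1 ord0 predT (fun j => f (Y j))) => // j _ h.
exists j; rewrite inE; apply/forallP => k; exact: h.
Qed.

Lemma Wt_sum1 (R : realType) n m (f : bits n -> R) (Y : {ffun 'I_m -> bits n}) :
  (0 < m)%N -> \sum_j Wt f Y j = 1.
Proof.
move=> m0; have [j jw] := winners_ex f Y m0.
rewrite /Wt -big_mkcond /= sumr_const.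
have h : #|winners f Y| != 0%N by apply/eqP => /eqP; rewrite cards_eq0 => /eqP e; move: jw; rewrite e inE.
rewrite -[_ *+ _]mulr_natr mulVf //.
by rewrite pnatr_eq0.
Qed.

Lemma mono_le (R : realType) n (f : bits n -> R) (y z : bits n) :
  monotone_fun f -> (forall i, y i ==> z i) -> f y <= f z.
Proof.
move=> fm h; case: (eqVneq z y) => [->//|ne].
by apply/ltW/fm.
Qed.

Lemma flip_lt (R : realType) n (f : bits n -> R) (y : bits n) i :
  monotone_fun f -> y i -> f (flipb y i) < f y.
Proof.
move=> fm yi; apply: fm.
  apply/eqP => /ffunP /(_ i); rewrite flipb_i yi.
  done.
move=> k; rewrite ffunE; case: eqP => [->|_]; by rewrite ?yi ?implybb.
Qed.

Lemma Wt_flip (R : realType) n m (f : bits n -> R) (Y : {ffun 'I_m -> bits n}) j i :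
  monotone_fun f -> Y j i -> Wt f (flipP Y j i) j <= Wt f Y j.
Proof.
move=> fm yi.
have lt := flip_lt fm yi.
rewrite {1}/Wt; case: ifP => [jw|_]; last exact: Wt_ge0.
have hw : winners f Y = [set j].
  apply/setP => k; rewrite !inE.
  have hk : forall k', k' != j -> f (Y k') < f (Y j).
    move=> k' nk; move: jw; rewrite inE => /forallP /(_ k').
    by rewrite flipP_ne // flipP_j => /le_lt_trans; apply.
  case: (eqVneq k j) => [->|nk].
    apply/forallP => k'; case: (eqVneq k' j) => [->//|nk'].
    exact: ltW (hk k' nk').
  apply/negbTE; rewrite negb_forall; apply/existsP; exists j.
  by rewrite -ltNge hk.
have := Wt_le1 f (flipP Y j i) j; rewrite {1}/Wt jw => h.
by rewrite /Wt hw inE eqxx cards1 invr1.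
Qed.

Lemma noSz_le n (x y : bits n) : ~~ Sz x y -> forall i, y i ==> x i.
Proof.
move=> h i; apply/implyP => yi; apply/negPn/negP => xi.
by move: h; rewrite negb_exists => /forallP /(_ i); rewrite xi yi.
Qed.

Lemma winner_Sz (R : realType) n m (f : bits n -> R) (x : bits n)
    (Y : {ffun 'I_m -> bits n}) j0 k :
  monotone_fun f -> Sz x (Y j0) -> (forall i, x i ==> Y j0 i) ->
  k \in winners f Y -> Sz x (Y k).
Proof.
move=> fm sz up kw; apply: contraT => nsz.
have h1 : f (Y k) <= f x by apply: mono_le => //; apply: noSz_le.
have h2 : f x < f (Y j0).
  apply: fm => //; apply/eqP => e; move: sz; rewrite e.
  by case/existsP => i; rewrite andNb.
move: kw; rewrite inE => /forallP /(_ j0) h3.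
by have := lt_le_trans h2 (le_trans h3 h1); rewrite ltxx.
Qed.

Lemma Wt_copy (R : realType) n m (f : bits n -> R) (x : bits n)
    (Y : {ffun 'I_m -> bits n}) j k i :
  monotone_fun f -> ~~ Sz x (Y j) -> x i -> ~~ Y j i -> k != j -> Y k = x ->
  Wt f Y j = 0.
Proof.
move=> fm nsz xi yi kj yk.
have h : f (Y j) < f x.
  apply: fm; last exact: noSz_le.
  by apply/eqP => /ffunP /(_ i); rewrite (negbTE yi) xi.
rewrite /Wt; case: ifP => // jw.
move: jw; rewrite inE => /forallP /(_ k); rewrite yk => h3.
by have := lt_le_trans h h3; rewrite ltxx.
Qed.


Definition NC n m (x : bits n) (j : 'I_m) (Y : {ffun 'I_m -> bits n}) : bool :=
  [forall k, (k == j) || (Y k != x)].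

Lemma prob_NC (R : realType) n m (c : R) (x : bits n) (j : 'I_m) :
  \sum_(Y : {ffun 'I_m -> bits n}) pop_prob c x Y * (NC x j Y)%:R
    = (1 - mut_prob c x x) ^+ m.-1.
Proof.
transitivity (\sum_(Y : {ffun 'I_m -> bits n}) pop_prob c x Y *
   \prod_k (((fun k y => (k == j) || (y != x)) k (Y k))%:R : R)).
  by apply: eq_bigr => Y _; rewrite prod_ind.
rewrite (pop_prod_event c x (fun k y => (k == j) || (y != x))) (bigD1 j) //=.
rewrite (eq_bigl predT) ?mut_sum1 ?mul1r; last by move=> y; rewrite eqxx.
rewrite (eq_bigr (fun _ => 1 - mut_prob c x x)); last first.
  move=> k /negbTE kj; rewrite (eq_bigl (fun y => y != x)); last by move=> y; rewrite kj.
  have := mut_sum1 c x; rewrite (bigD1 x) //= => e.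
  by rewrite -e addrAC subrr add0r.
rewrite prodr_const; congr (_ ^+ _).
by rewrite cardC1 card_ord.
Qed.

Lemma ji_bound (R : realType) n m (c : R) (x : bits n) (f : bits n -> R)
    (j : 'I_m) (i : 'I_n) :
  0 <= c -> c <= 1 -> (0 < n)%N -> monotone_fun f -> x i ->
  \sum_(Y : {ffun 'I_m -> bits n}) pop_prob c x Y * (Wt f Y j * (~~ Y j i)%:R)
  <= c / n%:R * \sum_(Y : {ffun 'I_m -> bits n}) pop_prob c x Y * (Wt f Y j * (Sz x (Y j))%:R)
     + c / n%:R * (1 - mut_prob c x x) ^+ m.-1.
Proof.
move=> c0 c1 n0 fm xi.
have /andP[p0 p1] := pR_bounds c0 c1 n0.
set p := c / n%:R in p0 p1 *.
pose phi1 (Y : {ffun 'I_m -> bits n}) := Wt f Y j * (Sz x (Y j))%:R.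
pose phi2 (Y : {ffun 'I_m -> bits n}) := Wt f Y j * (~~ Sz x (Y j))%:R * (NC x j Y)%:R.
have split1 : forall Y : {ffun 'I_m -> bits n},
    pop_prob c x Y * (Wt f Y j * (~~ Y j i)%:R)
    <= pop_prob c x Y * (phi1 Y * (Y j i != x i)%:R + phi2 Y * (Y j i != x i)%:R).
  move=> Y; rewrite xi /phi1 /phi2; apply: ler_wpM2l; first exact: pop_ge0.
  have -> : (Y j i != true) = ~~ Y j i by case: (Y j i).
  case: (boolP (Sz x (Y j))) => sz /=; first by rewrite mulr1 mulr0 !mul0r addr0.
  rewrite mulr0 mulr1 !mul0r add0r.
  case: (boolP (NC x j Y)) => nc; first by rewrite mulr1.
  case: (boolP (Y j i)) => yji; first by rewrite !mulr0.
  move: nc; rewrite negb_forall => /existsP[k]; rewrite negb_or negbK => /andP[kj /eqP yk].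
  by rewrite (Wt_copy fm sz xi yji kj yk) !mul0r.
have phi1_0 : forall Y, 0 <= phi1 Y by move=> Y; apply: mulr_ge0; [exact: Wt_ge0|exact: ler0n].
have phi2_0 : forall Y, 0 <= phi2 Y.
  by move=> Y; apply: mulr_ge0; [apply: mulr_ge0; [exact: Wt_ge0|exact: ler0n]|exact: ler0n].
have T1 := toggle_le (x := x) (phi := phi1) (j := j) (i := i) c0 c1 n0 phi1_0.
have T2 := toggle_le (x := x) (phi := phi2) (j := j) (i := i) c0 c1 n0 phi2_0.
have yt : forall Y : {ffun 'I_m -> bits n}, Y j i = x i -> Y j i by move=> Y ->.
have M1 : forall Y : {ffun 'I_m -> bits n}, Y j i = x i -> phi1 (flipP Y j i) <= phi1 Y.
  move=> Y yi; rewrite /phi1 flipP_j Sz_flip //.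
  by apply: ler_wpM2r; [exact: ler0n|apply: Wt_flip => //; apply: yt].
have NCf : forall Y : {ffun 'I_m -> bits n}, NC x j (flipP Y j i) = NC x j Y.
  move=> Y; apply: eq_forallb => k; case: (eqVneq k j) => // kj.
  by rewrite flipP_ne.
have M2 : forall Y : {ffun 'I_m -> bits n}, Y j i = x i -> phi2 (flipP Y j i) <= phi2 Y.
  move=> Y yi; rewrite /phi2 flipP_j Sz_flip // NCf.
  apply: ler_wpM2r; first exact: ler0n.
  by apply: ler_wpM2r; [exact: ler0n|apply: Wt_flip => //; apply: yt].
have {}T1 := T1 M1; have {}T2 := T2 M2.
have mk : forall phi : {ffun 'I_m -> bits n} -> R,
  \sum_(Y : {ffun 'I_m -> bits n} | Y j i != x i) pop_prob c x Y * phi Y =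
  \sum_(Y : {ffun 'I_m -> bits n}) pop_prob c x Y * (phi Y * (Y j i != x i)%:R).
  move=> phi; rewrite big_mkcond /=; apply: eq_bigr => Y _.
  by case: ifP; rewrite ?mulr1 ?mulr0.
rewrite mk in T1; rewrite mk in T2.
have P2 : \sum_(Y : {ffun 'I_m -> bits n}) pop_prob c x Y * phi2 Y <= (1 - mut_prob c x x) ^+ m.-1.
  rewrite -(prob_NC c x j); apply: ler_sum => Y _; apply: ler_wpM2l; first exact: pop_ge0.
  rewrite /phi2 -[X in _ <= X]mul1r; apply: ler_wpM2r; first exact: ler0n.
  rewrite -[X in _ <= X]mul1r.
  by apply: ler_pM; [exact: Wt_ge0|exact: ler0n|exact: Wt_le1|case: (Sz x (Y j))].
apply: le_trans (ler_sum _ (fun Y _ => split1 Y)) _.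
under eq_bigr => Y _ do rewrite mulrDr.
rewrite big_split /=.
have := ler_wpM2l p0 P2; rewrite -/p in T1 T2.
lra.
Qed.


Definition Tcnt (R : realType) n (x y : bits n) : R := \sum_(i | x i) ((~~ y i)%:R).
Definition hfun (R : realType) n (x y : bits n) : R := (Sz x y)%:R - Tcnt R x y.

Lemma ET_bound (R : realType) n m (c : R) (x : bits n) (f : bits n -> R) :
  0 <= c -> c <= 1 -> (0 < n)%N -> monotone_fun f ->
  \sum_(Y : {ffun 'I_m -> bits n}) pop_prob c x Y * \sum_j Wt f Y j * Tcnt R x (Y j)
  <= (\sum_(i | x i) c / n%:R) *
       (\sum_(Y : {ffun 'I_m -> bits n}) pop_prob c x Y * \sum_j Wt f Y j * (Sz x (Y j))%:R
        + m%:R * (1 - mut_prob c x x) ^+ m.-1).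
Proof.
move=> c0 c1 n0 fm.
rewrite [X in X <= _](_ : _ = \sum_j \sum_(i | x i) \sum_(Y : {ffun 'I_m -> bits n})
    pop_prob c x Y * (Wt f Y j * (~~ Y j i)%:R)); last first.
  symmetry; under eq_bigr => j _ do rewrite exchange_big /=.
  rewrite exchange_big /=; apply: eq_bigr => Y _.
  rewrite mulr_sumr; apply: eq_bigr => j _.
  rewrite /Tcnt !mulr_sumr; apply: eq_bigr => i _; ring.
apply: le_trans (ler_sum _ (fun j _ => ler_sum _ (fun i xi => @ji_bound R n m c x f j i c0 c1 n0 fm xi))) _.
set Q := (1 - mut_prob c x x) ^+ m.-1.
set p := c / n%:R.
rewrite le_eqVlt; apply/orP; left; apply/eqP; rewrite mulrDr.
under eq_bigr => j _ do rewrite big_split /=.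
rewrite big_split /=; congr (_ + _).
  rewrite exchange_big /= mulr_suml; apply: eq_bigr => i _.
  rewrite -mulr_sumr; congr (_ * _).
  rewrite exchange_big /=; apply: eq_bigr => Y _; rewrite mulr_sumr; apply: eq_bigr => j _.
  by [].
rewrite exchange_big /= mulr_suml; apply: eq_bigr => i _.
by rewrite sumr_const card_ord -mulr_natl; ring.
Qed.

Definition Bp n (x y : bits n) : bool := Sz x y && [forall i, x i ==> y i].

Lemma EA_ge (R : realType) n m (c : R) (x : bits n) (f : bits n -> R) :
  0 <= c -> c <= 1 -> (0 < n)%N -> (0 < m)%N -> monotone_fun f ->
  \sum_(Y : {ffun 'I_m -> bits n} | [exists j, Bp x (Y j)]) pop_prob c x Y
  <= \sum_(Y : {ffun 'I_m -> bits n}) pop_prob c x Y * \sum_j Wt f Y j * (Sz x (Y j))%:R.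
Proof.
move=> c0 c1 n0 m0 fm.
rewrite [X in _ <= X](bigID (fun Y : {ffun 'I_m -> bits n} => [exists j, Bp x (Y j)])) /=.
rewrite -[X in X <= _]addr0; apply: lerD.
  apply: ler_sum => Y /existsP[j0 /andP[sz /forallP up]].
  suff -> : \sum_j Wt f Y j * (Sz x (Y j))%:R = 1 by rewrite mulr1.
  rewrite -[RHS](Wt_sum1 f Y m0); apply: eq_bigr => j _.
  rewrite /Wt; case: ifP => jw; last by rewrite mul0r.
  by rewrite (winner_Sz fm sz up jw) mulr1.
apply: sumr_ge0 => Y _; apply: mulr_ge0; first exact: pop_ge0.
apply: sumr_ge0 => j _; apply: mulr_ge0; [exact: Wt_ge0|exact: ler0n].
Qed.

Lemma next_exp_h (R : realType) n (c lam : R) (x : bits n) (f : bits n -> R) :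
  next_exp c lam x f (hfun R x) =
  \sum_(Y : {ffun 'I_(round_nat lam) -> bits n}) pop_prob c x Y * \sum_j Wt f Y j * (Sz x (Y j))%:R
  - \sum_(Y : {ffun 'I_(round_nat lam) -> bits n}) pop_prob c x Y * \sum_j Wt f Y j * Tcnt R x (Y j).
Proof.
rewrite /next_exp -sumrB; apply: eq_bigr => Y _.
rewrite select_expE -mulrBr -sumrB; congr (_ * _); apply: eq_bigr => j _.
by rewrite /hfun mulrBr.
Qed.

Lemma next_exp_mono (R : realType) n (c lam : R) (x : bits n) (f g h : bits n -> R) :
  0 <= c -> c <= 1 -> (0 < n)%N -> (forall y, h y <= g y) ->
  next_exp c lam x f h <= next_exp c lam x f g.
Proof.
move=> c0 c1 n0 hg; apply: ler_sum => Y _; apply: ler_wpM2l; first exact: pop_ge0.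
rewrite !select_expE; apply: ler_sum => j _; apply: ler_wpM2l; [exact: Wt_ge0|exact: hg].
Qed.



Lemma card_sumR (R : realType) n (b : 'I_n -> bool) :
  (#|[set i | b i]|%:R : R) = \sum_i (b i)%:R.
Proof.
rewrite -sum1_card natr_sum big_mkcond /=; apply: eq_bigr => i _.
by rewrite inE; case: (b i).
Qed.

Lemma zeros_diff (R : realType) n (x y : bits n) :
  ((zeros x)%:R : R) - (zeros y)%:R = \sum_i ((~~ x i && y i)%:R) - Tcnt R x y.
Proof.
rewrite /zeros !card_sumR /Tcnt -!sumrB [X in _ = _ - X]big_mkcond /= -sumrB.
by apply: eq_bigr => i _; case: (x i); case: (y i); rewrite /= ?subrr ?sub0r ?subr0.
Qed.

Lemma Tcnt_ge0 (R : realType) n (x y : bits n) : 0 <= Tcnt R x y.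
Proof. by apply: sumr_ge0 => i _; exact: ler0n. Qed.

Lemma S_ge (R : realType) n (x y : bits n) :
  ((Sz x y)%:R : R) <= \sum_i ((~~ x i && y i)%:R).
Proof.
case: (boolP (Sz x y)) => [/existsP[i hi]|_]; last by apply: sumr_ge0 => i _; exact: ler0n.
rewrite (bigD1 i) //= hi -[X in X <= _]addr0; apply: lerD => //.
by apply: sumr_ge0 => k _; exact: ler0n.
Qed.

Lemma g1_ge (R : realType) n (x y : bits n) :
  hfun R x y <= (zeros x)%:R - (zeros y)%:R.
Proof. by rewrite zeros_diff /hfun lerD2r S_ge. Qed.

Lemma g2_ge (R : realType) n (x y : bits n) :
  hfun R x y <= Num.min 1 ((zeros x)%:R - (zeros y)%:R).
Proof.
rewrite le_min g1_ge andbT /hfun.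
have := Tcnt_ge0 R x y; have : ((Sz x y)%:R : R) <= 1 by case: (Sz x y).
lra.
Qed.

Lemma ones_zeros n (x : bits n) : (#|[set i | x i]| + zeros x)%N = n.
Proof.
rewrite /zeros -[RHS](card_ord n) -(cardsC [set i | x i]); congr (_ + _)%N.
by apply: eq_card => i; rewrite !inE.
Qed.

Lemma sum_ones (R : realType) n (x : bits n) (p : R) :
  \sum_(i | x i) p = (#|[set i | x i]|%:R) * p.
Proof.
rewrite card_sumR mulr_suml big_mkcond /=; apply: eq_bigr => i _.
by case: (x i); rewrite ?mul1r ?mul0r.
Qed.

Lemma betaBp (R : realType) n (c : R) (x : bits n) :
  \sum_(y | Bp x y) mut_prob c x y
  = (1 - c / n%:R) ^+ #|[set i | x i]| * \sum_(y | Sz x y) mut_prob c x y.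
Proof.
rewrite cardE -restore_ones ?enum_uniq //; last first.
  by apply/allP => i; rewrite mem_enum inE.
apply: eq_bigl => y; rewrite /Bp; congr (_ && _).
apply/forallP/allP => h i.
  by rewrite mem_enum inE => xi; move: (h i); rewrite xi /= => ->.
by apply/implyP => xi; have := h i; rewrite mem_enum inE xi => /(_ isT) /eqP ->.
Qed.

Unset Implicit Arguments.

Theorem mainTheorem10 (R : realType) (c : R) :
  0 < c -> c <= 1 ->
  exists a1 a2 b : R, [/\ 0 < a1, 0 < a2 & 0 < b] /\
  forall (F s : R), 1 < F -> 0 < s ->
  forall (n : nat) (x : bits n) (lam : R) (f : bits n -> R),
    1 <= lam -> monotone_fun f -> (0 < zeros x)%N ->
    let Zt := (zeros x)%:R in
    let rhs := probB c lam x * (a1 * (1 - c * (1 - Zt / n%:R)))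
               - a2 * expR (- (b * lam)) in
    next_exp c lam x f (fun y => Zt - (zeros y)%:R) >= rhs /\
    next_exp c lam x f (fun y => Num.min 1 (Zt - (zeros y)%:R)) >= rhs.
Proof.
move=> c0 c1.
have [a2 [b [a20 b0 errb]]] := err_bound R.
exists (expR (-2)), a2, b; split; first by split => //; exact: expR_gt0.
move=> F s _ _ n x lam f lam1 fm Z0 Zt rhs.
have c0' : 0 <= c by exact: ltW.
have oz := ones_zeros x.
set K := #|[set i | x i]| in oz.
have n0 : (0 < n)%N by rewrite -oz; apply: leq_trans Z0 (leq_addl _ _).
set m := round_nat lam.
have h2 : (0:R) < 2^-1 by rewrite invr_gt0.
have h2' : (2^-1 : R) + 2^-1 = 1 by field.
have m1 : (1 <= m)%N by rewrite /m /round_nat truncn_gt0; lra.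
have mlam : lam - 2^-1 <= m%:R.
  have := @truncn_itv R (lam + 2^-1); rewrite /m /round_nat.
  case/(_ _)/andP => [|_]; first lra.
  rewrite -natr1 => h; set t := (1 + 1 : R)^-1 in h *.
  have : t + t = 1 by rewrite /t; field.
  lra.
set p := c / n%:R.
have /andP[p0 p1] : 0 <= p <= 1 by apply: pR_bounds.
set theta := \sum_(i | x i) p.
have thetaE : theta = c * (1 - Zt / n%:R).
  have nR : (n%:R : R) = K%:R + (zeros x)%:R by rewrite -natrD oz.
  rewrite /theta sum_ones /p /Zt nR.
  have : (K%:R + (zeros x)%:R : R) != 0 by rewrite -natrD pnatr_eq0 oz -lt0n.
  by move=> h; field.
have nR : (n%:R : R) = K%:R + Zt by rewrite /Zt -natrD oz.
have Zge : (0 : R) <= Zt by exact: ler0n.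
have Kge : (0 : R) <= K%:R by exact: ler0n.
have npos : (0 : R) < n%:R by rewrite ltr0n.
have th0 : 0 <= theta by rewrite /theta sum_ones; exact: mulr_ge0.
have th1 : theta <= 1.
  rewrite thetaE; have : Zt / n%:R >= 0 by exact: divr_ge0.
  have : Zt / n%:R <= 1 by rewrite ler_pdivrMr // mul1r nR; lra.
  nra.
set EA := \sum_(Y : {ffun 'I_m -> bits n}) pop_prob c x Y * \sum_j Wt f Y j * (Sz x (Y j))%:R.
set ET := \sum_(Y : {ffun 'I_m -> bits n}) pop_prob c x Y * \sum_j Wt f Y j * Tcnt R x (Y j).
have Eh : next_exp c lam x f (hfun R x) = EA - ET by exact: next_exp_h.
set Q := (1 - mut_prob c x x) ^+ m.-1.
have ETb : ET <= theta * (EA + m%:R * Q) by exact: ET_bound.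
have EAb := @EA_ge R n m c x f c0' c1 n0 m1 fm.
rewrite -/EA in EAb.
rewrite prob_exists betaBp -/p -/K in EAb.
have PBE : probB c lam x = 1 - (1 - \sum_(y | Sz x y) mut_prob c x y) ^+ m.
  by rewrite /probB -prob_exists.
set bB := \sum_(y | Sz x y) mut_prob c x y in EAb PBE.
have bB0 : 0 <= bB by apply: sumr_ge0 => y _; exact: mut_ge0.
have bB1 : bB <= 1.
  rewrite -(mut_sum1 c x) /bB [X in _ <= X](bigID (Sz x)) /= lerDl.
  by apply: sumr_ge0 => y _; exact: mut_ge0.
have pn : p * n%:R <= 1 by rewrite /p divfK ?lt0r_neq0.
have QK0 : 0 <= (1 - p) ^+ K by apply: exprn_ge0; lra.
have QK1 : (1 - p) ^+ K <= 1 by apply: exprn_ile1; lra.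
have QKe : expR (-2) <= (1 - p) ^+ K.
  case: (ltnP 1 n) => n2.
    by apply: (pow_lb (n:=n) (k:=K)) => //; rewrite -oz leq_addr.
  have K0 : K = 0%N.
    by apply/eqP; rewrite -leqn0 -(leq_add2r (zeros x)) add0n oz; exact: leq_trans n2 Z0.
  by rewrite K0 expr0 expR_le1; lra.
have hq : 0 <= (1 - p) ^+ K <= 1 by rewrite QK0 QK1.
have hb : 0 <= bB <= 1 by rewrite bB0 bB1.
have G := geom_cmp m hq hb.
have Q0 : 0 <= Q.
  apply: exprn_ge0; rewrite subr_ge0 mut_copy -/p; apply: exprn_ile1; lra.
have errB : theta * (m%:R * Q) <= a2 * expR (- (b * lam)).
  have ae : 0 < a2 * expR (- (b * lam)) by apply: mulr_gt0 => //; exact: expR_gt0.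
  case: (posnP K) => [K0 | Kpos].
    by rewrite /theta sum_ones -/K K0 !mul0r; exact: ltW.
  have n2 : (1 < n)%N by rewrite -oz; exact: (leq_add Kpos Z0).
  have qe : expR (-2) <= mut_prob c x x.
    by rewrite mut_copy -/p; apply: (pow_lb (n:=n) (k:=n)).
  have q1 : mut_prob c x x <= 1 by rewrite mut_copy -/p; apply: exprn_ile1; lra.
  have hr : 0 <= 1 - mut_prob c x x <= 1 - expR (-2) by apply/andP; split; lra.
  have := errb lam (1 - mut_prob c x x) m hr mlam m1; rewrite -/Q => h.
  have mQ0 : 0 <= m%:R * Q by apply: mulr_ge0 => //; exact: ler0n.
  by apply: le_trans h; rewrite -[X in _ <= X]mul1r; apply: ler_wpM2r.
have PB0 : 0 <= probB c lam x.
  rewrite PBE subr_ge0; apply: exprn_ile1; lra.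
have PBm : expR (-2) * probB c lam x <= EA.
  apply: le_trans EAb; apply: le_trans G; rewrite -PBE; exact: ler_wpM2r.
have main : rhs <= next_exp c lam x f (hfun R x).
  rewrite Eh /rhs -thetaE.
  have := ler_wpM2l (_ : 0 <= 1 - theta) PBm.
  move=> /(_ ltac:(lra)) => h.
  nra.
split; apply: (le_trans main); apply: next_exp_mono => // y.
  exact: g1_ge.
exact: g2_ge.
Qed.
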